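(* Let $M\ge1$, $T\ge M+1$, $n\ge1$ be integers and $p=\frac1{M+1}$. Let $\mathbf{c}_1,\dots,\mathbf{c}_T\in\{0,1\}^n$ be random words whose $Tn$ bits are independent, each equal to $1$ with probability $p$. Let $E_{\mathrm{id}}$ be the event that there exist $t\in\{1,\dots,T\}$, a set $S\subseteq\{1,\dots,T\}\setminus\{t\}$ with $|S|=M$, and shifts $s_u\in\{0,\dots,n-1\}$ ($u\in S$) such that $\bigvee_{u\in S}\sigma_{s_u}(\mathbf{c}_u)$ covers $\mathbf{c}_t$. Then \[\Pr(E_{\mathrm{id}})\le \exp\!\Big((M+1)\ln T+M\ln n-\tfrac{n}{M+1}\mathrm{e}^{-1}\Big).\]
   Context: $\vee$ is componentwise Boolean OR. A vector $\mathbf{y}$ covers $\mathbf{z}$ if $y_i\ge z_i$ for all $i$. For $\mathbf{c}\in\{0,1\}^n$ and $s\in\{0,\dots,n-1\}$, $\sigma_s(\mathbf{c})$ is defined by $(\sigma_s(\mathbf{c}))_i=c_{i-s}$ if $i>s$ and $0$ otherwise. *)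

(* Defs.v *)
From HB Require Import structures.
From mathcomp Require Import all_boot all_order all_algebra.
From mathcomp Require Import all_classical all_reals all_analysis.
Unset Printing Implicit Defensive.
Import Order.TTheory GRing.Theory Num.Theory.

(* Positions are 0-indexed: 'I_n = {0,...,n-1} stands for {1,...,n}. *)
Definition word (n : nat) := {ffun 'I_n -> bool}.

(* sigma_s(c): (sigma_s c)_i = c_{i-s} if i > s (1-indexed), 0 otherwise.
   In 0-indexed form: position i holds c_j for the j with j + s = i, if any. *)
Definition shiftw (n : nat) (s : nat) (c : word n) (i : 'I_n) : bool :=
  [exists j : 'I_n, (j + s == i) && c j].

Definition covers (n : nat) (y z : 'I_n -> bool) : bool :=
  [forall i, z i ==> y i].

Definition E_id (M T n : nat) (c : {ffun 'I_T -> word n}) : bool :=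
  [exists t : 'I_T, exists S : {set 'I_T},
     [&& t \notin S, #|S| == M &
       [exists sh : {ffun 'I_T -> 'I_n},
          covers n (fun i => \big[orb/false]_(u in S) shiftw n (sh u) (c u) i) (c t)]]].

Definition cfg_weight {R : realType} (p : R) (T n : nat) (c : {ffun 'I_T -> word n}) : R :=
  \prod_(t : 'I_T) \prod_(i : 'I_n) (if c t i then p else 1 - p).

Definition Prob {R : realType} (p : R) (T n : nat)
  (E : {ffun 'I_T -> word n} -> bool) : R :=
  \sum_(c | E c) cfg_weight p T n c.

(* Main.v *)
Require Import Defs.
From HB Require Import structures.
From mathcomp Require Import all_boot all_order all_algebra.
From mathcomp Require Import all_classical all_reals all_analysis.
From mathcomp Require Import ring lra.
Import Order.TTheory GRing.Theory Num.Theory.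
Local Open Scope ring_scope.

Lemma prod_ind (R : comPzRingType) (I : finType) (b : I -> bool) :
  \prod_i ((b i)%:R : R) = ([forall i, b i])%:R.
Proof.
case: (boolP [forall i, b i]) => [/forallP H | /forallPn [i bi]].
  by rewrite big1 // => i _; rewrite H.
by rewrite (bigD1 i) //= (negbTE bi) mul0r.
Qed.

Lemma le_sum_single (R : realType) (I : finType) (P : pred I) (F : I -> R) i :
  P i -> (forall j, P j -> 0 <= F j) -> F i <= \sum_(j | P j) F j.
Proof.
move=> Pi F0; rewrite (bigD1 i) //= lerDl sumr_ge0 // => j /andP[Pj _].
exact: F0.
Qed.

Definition wb {R : realType} (p : R) (b : bool) : R := if b then p else 1 - p.

Lemma col_sum (R : realType) (p : R) (T : nat) (t : 'I_T) (S : {set 'I_T}) :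
  t \notin S ->
  \sum_(col : {ffun 'I_T -> bool})
     ((col t ==> [exists u in S, col u])%:R * \prod_u wb p (col u))
  = 1 - p * (1 - p) ^+ #|S|.
Proof.
move=> tS.
pose ind := fun (u : 'I_T) (b : bool) => ((u == t) ==> b) && ((u \in S) ==> ~~ b).
have E1 : forall col : {ffun 'I_T -> bool},
   ((col t ==> [exists u in S, col u])%:R : R)
   = 1 - \prod_u (ind u (col u))%:R.
  move=> col; rewrite prod_ind.
  have -> : [forall u, ind u (col u)] = col t && ~~ [exists u in S, col u].
    apply/forallP/andP.
      move=> H; split; first by move: (H t); rewrite /ind eqxx (negbTE tS) => /andP[].
      apply/existsP => -[u /andP[uS cu]].
      by have := H u; rewrite /ind uS cu /= andbF.
    move=> [ct /existsP ne] u; rewrite /ind.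
    case: eqP => [->|_]; first by rewrite ct (negbTE tS).
    case uS: (u \in S) => //=; apply/negP => cu; apply: ne; exists u.
    by rewrite uS cu.
  by case: (col t); case: [exists u in S, col u] => /=; rewrite ?subr0 ?subrr.
under eq_bigr => col _ do rewrite E1 mulrBl mul1r.
rewrite sumrB.
have -> : \sum_(col : {ffun 'I_T -> bool}) \prod_u wb p (col u) = 1.
  rewrite -(bigA_distr_bigA (fun u b => wb p b)) /=.
  by rewrite big1 // => u _; rewrite big_bool /wb /=; ring.
congr (_ - _).
under eq_bigr => col _ do rewrite -big_split /=.
rewrite -(bigA_distr_bigA (fun u b => (ind u b)%:R * wb p b)) /=.
under eq_bigr => u _ do rewrite big_bool /=.
rewrite (eq_bigr (fun u => (if u == t then p else 1) * (if u \in S then 1 - p else 1))).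
  rewrite big_split /= -big_mkcond -[X in _ * X]big_mkcond /=.
  by rewrite big_pred1_eq prodr_const.
move=> u _; rewrite /ind /wb; case: eqP => [->|_] /=.
  by rewrite (negbTE tS) /=; ring.
by case: (u \in S) => /=; ring.
Qed.

Definition rotw n (r : nat) (j : 'I_n) : 'I_n :=
  Ordinal (ltn_pmod (j + r) (leq_ltn_trans (leq0n j) (ltn_ord j))).
Arguments rotw {n}.

Lemma rot_val n r (j : 'I_n) : val (rotw r j) = ((j + r) %% n)%N.
Proof. by []. Qed.

Lemma rot0 n (j : 'I_n) : rotw 0 j = j.
Proof. by apply: val_inj; rewrite rot_val addn0 modn_small. Qed.

Lemma rot_inj n r : injective (@rotw n r).
Proof.
move=> j k /(congr1 val); rewrite !rot_val => /eqP.
rewrite eqn_modDr !modn_small // => /eqP e; exact: val_inj.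
Qed.

Definition gmap T n (r : 'I_T -> nat) (c : {ffun 'I_T -> word n}) :
  {ffun 'I_T -> word n} := [ffun u => [ffun j => c u (rotw (r u) j)]].
Arguments gmap {T n}.

Lemma gmap_inj T n r : injective (@gmap T n r).
Proof.
move=> c1 c2 e; apply/ffunP => u; apply/ffunP => i.
have [g gK Kg] := injF_bij (@rot_inj n (r u)).
have := congr1 (fun c : {ffun 'I_T -> word n} => c u (g i)) e.
by rewrite /gmap !ffunE Kg.
Qed.

Lemma weight_wb (R : realType) (p : R) T n (c : {ffun 'I_T -> word n}) :
  cfg_weight p T n c = \prod_u \prod_i wb p (c u i).
Proof. by []. Qed.

Lemma gmap_weight (R : realType) (p : R) T n r c :
  cfg_weight p T n (@gmap T n r c) = cfg_weight p T n c.
Proof.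
rewrite !weight_wb; apply: eq_bigr => u _.
rewrite [RHS](reindex_inj (@rot_inj n (r u))); apply: eq_bigr => j _.
by rewrite /gmap !ffunE.
Qed.

Lemma weight_ge0 (R : realType) (p : R) T n c :
  0 <= p <= 1 -> 0 <= cfg_weight p T n c.
Proof.
move=> /andP[p0 p1]; rewrite weight_wb; apply: prodr_ge0 => u _.
apply: prodr_ge0 => i _; rewrite /wb; case: (c u i) => //.
by rewrite subr_ge0.
Qed.

Lemma Prob_ind (R : realType) (p : R) T n E :
  Prob p T n E = \sum_c (E c)%:R * cfg_weight p T n c.
Proof.
rewrite /Prob big_mkcond; apply: eq_bigr => c _.
by case: (E c); rewrite ?mul1r ?mul0r.
Qed.

Definition aligned T n (t : 'I_T) (S : {set 'I_T}) (c : {ffun 'I_T -> word n}) :=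
  [forall i, c t i ==> [exists u in S, c u i]].
Arguments aligned {T n}.

Lemma aligned_prob (R : realType) (p : R) T n (t : 'I_T) (S : {set 'I_T}) : t \notin S ->
  Prob p T n (@aligned T n t S) = (1 - p * (1 - p) ^+ #|S|) ^+ n.
Proof.
move=> tS; rewrite Prob_ind.
pose Phi := fun col : {ffun 'I_T -> bool} =>
  ((col t ==> [exists u in S, col u])%:R * \prod_u wb p (col u)).
have E1 : forall c : {ffun 'I_T -> word n},
  (aligned t S c)%:R * cfg_weight p T n c = \prod_i Phi [ffun u => c u i].
  move=> c; rewrite weight_wb exchange_big /= /aligned -prod_ind -big_split /=.
  by apply: eq_bigr => i _; rewrite /Phi !ffunE; congr (_ * _);
     [ congr ((_ ==> _)%:R); apply: eq_existsb => u; rewrite ffunE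
     | apply: eq_bigr => u _; rewrite ffunE ].
under eq_bigr => c _ do rewrite E1.
pose tr' := fun d : {ffun 'I_n -> {ffun 'I_T -> bool}} =>
  [ffun u => [ffun i => d i u]] : {ffun 'I_T -> word n}.
pose tr := fun c : {ffun 'I_T -> word n} =>
  [ffun i => [ffun u => c u i]] : {ffun 'I_n -> {ffun 'I_T -> bool}}.
rewrite (reindex tr'); last first.
  apply: onW_bij; exists tr => x.
    by apply/ffunP => i; apply/ffunP => u; rewrite !ffunE.
  by apply/ffunP => u; apply/ffunP => i; rewrite !ffunE.
under eq_bigr => d _.
  under eq_bigr => i _ do (have -> : [ffun u => tr' d u i] = d i by
    apply/ffunP => u; rewrite !ffunE).
  over.
rewrite -(bigA_distr_bigA (fun (i : 'I_n) col => Phi col)) /=.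
by rewrite /Phi col_sum // prodr_const card_ord.
Qed.

Definition cover_ev T n (t : 'I_T) (S : {set 'I_T}) (sh : {ffun 'I_T -> 'I_n})
  (c : {ffun 'I_T -> word n}) : bool :=
  covers n (fun i => \big[orb/false]_(u in S) shiftw n (sh u) (c u) i) (c t).
Arguments cover_ev {T n}.

Definition rr {T n} (S : {set 'I_T}) (sh : {ffun 'I_T -> 'I_n}) (u : 'I_T) : nat :=
  if u \in S then val (sh u) else 0%N.

Lemma cover_aligned {T n} (t : 'I_T) (S : {set 'I_T}) (sh : {ffun 'I_T -> 'I_n}) (c : {ffun 'I_T -> word n}) : t \notin S ->
  cover_ev t S sh (gmap (rr S sh) c) -> aligned t S c.
Proof.
move=> tS /forallP H; apply/forallP => i; move: (H i).
rewrite big_orE /gmap !ffunE /rr (negbTE tS) rot0.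
move=> /implyP Hi; apply/implyP => cti; move: (Hi cti).
move=> /existsP[u /andP[uS /existsP[j /andP[/eqP e cu]]]].
apply/existsP; exists u; rewrite uS /=.
move: cu; rewrite !ffunE uS.
have -> : rotw (val (sh u)) j = i.
  by apply: val_inj; rewrite rot_val e modn_small.
by [].
Qed.

Lemma cover_prob (R : realType) (p : R) T n (t : 'I_T) (S : {set 'I_T}) (sh : {ffun 'I_T -> 'I_n}) :
  0 <= p <= 1 -> t \notin S ->
  Prob p T n (cover_ev t S sh) <= (1 - p * (1 - p) ^+ #|S|) ^+ n.
Proof.
move=> p01 tS; rewrite -(@aligned_prob R p T n t S tS) !Prob_ind.
rewrite (reindex_inj (@gmap_inj T n (rr S sh))) /=.
apply: ler_sum => c _; rewrite gmap_weight.
apply: ler_wpM2r; first exact: weight_ge0.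
case: (boolP (cover_ev t S sh (gmap (rr S sh) c))) => [h|_]; last first.
  by case: (aligned t S c).
by rewrite (@cover_aligned T n t S sh c tS h) ?mul1r.
Qed.

Lemma bin_le_exp T M : ('C(T, M) <= T ^ M)%N.
Proof.
apply: (@leq_trans (T ^_ M)).
  by rewrite -bin_ffact leq_pmulr // fact_gt0.
rewrite ffact_prod -(card_ord M) -prod_nat_const card_ord.
by apply: leq_prod => i _; rewrite leq_subr.
Qed.

Lemma e_le (R : realType) (M : nat) : (1 <= M)%N ->
  expR (-1) <= (1 - (M.+1%:R : R)^-1) ^+ M.
Proof.
move=> hM.
have M0 : (M%:R : R) != 0 by rewrite pnatr_eq0 -lt0n.
have MS : (M.+1%:R : R) = M%:R + 1 by rewrite -addn1 natrD.
have Mp : (0 : R) < M%:R by rewrite ltr0n.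
have -> : (-1 : R) = M%:R * (- (M%:R^-1)) by field.
rewrite expRM_natl; apply: lerXn2r; rewrite ?nnegrE ?expR_ge0 //.
  rewrite MS subr_ge0 invf_le1 ?ler_addr; lra.
rewrite expRN.
have -> : 1 - (M.+1%:R : R)^-1 = (1 + M%:R^-1)^-1.
  rewrite MS; field; apply/andP; split => //; lra.
rewrite lef_pV2 ?posrE ?expR_gt0 //.
exact: expR_ge1Dx.
Qed.

Lemma final_ineq (R : realType) (M T n : nat) : (1 <= M)%N -> (0 < T)%N -> (0 < n)%N ->
  (1 - (M.+1%:R : R)^-1 * (1 - (M.+1%:R : R)^-1) ^+ M) ^+ n
    * (n ^ M)%:R * (T ^ M)%:R * T%:R
  <= expR (M.+1%:R * ln (T%:R : R) + M%:R * ln (n%:R : R)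
        - n%:R / M.+1%:R * expR (-1)).
Proof.
move=> hM hT n0.
set p := (M.+1%:R : R)^-1.
have p0 : 0 <= p by rewrite invr_ge0.
have p1 : p <= 1 by rewrite invf_le1 // ler1n.
have e0 : 0 <= expR (-1 : R) := expR_ge0 _.
have ep := e_le R M hM; rewrite -/p in ep.
have q0 : 0 <= 1 - p * (1 - p) ^+ M.
  rewrite subr_ge0 mulr_ile1 // ?exprn_ge0 ?subr_ge0 // exprn_ile1 ?subr_ge0 //.
  lra.
have qE : 1 - p * (1 - p) ^+ M <= expR (- (p * expR (-1))).
  apply: le_trans (expR_ge1Dx _).
  have : p * expR (-1) <= p * (1 - p) ^+ M by rewrite ler_wpM2l.
  lra.
rewrite !expRD expRM_natl lnK ?posrE ?ltr0n // expRM_natl lnK ?posrE ?ltr0n //.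
have -> : - (n%:R / M.+1%:R * expR (-1)) = n%:R * (- (p * expR (-1 : R))).
  by rewrite /p; ring.
rewrite expRM_natl !natrX exprSr.
have -> : T%:R ^+ M * T%:R * n%:R ^+ M * expR (- (p * expR (-1))) ^+ n
  = expR (- (p * expR (-1 : R))) ^+ n * (n%:R ^+ M * T%:R ^+ M * T%:R).
  by ring.
rewrite -!mulrA; apply: ler_wpM2r.
  by rewrite !mulr_ge0 // exprn_ge0.
by apply: lerXn2r; rewrite ?nnegrE ?expR_ge0.
Qed.
Arguments le_sum_single {R I P F} i.

Lemma union_bound (R : realType) (p : R) (M T n : nat) (z : 'I_n) :
  0 <= p <= 1 ->
  Prob p T n (E_id M T n) <=
  \sum_(t : 'I_T) \sum_(S : {set 'I_T} | (t \notin S) && (#|S| == M))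
     \sum_(sh in pffun_on z S predT) Prob p T n (cover_ev t S sh).
Proof.
move=> p01.
have X0 : forall t S sh c, 0 <= (@cover_ev T n t S sh c)%:R * cfg_weight p T n c.
  by move=> t S sh c; rewrite mulr_ge0 ?ler0n ?weight_ge0.
apply: (@le_trans _ _ (\sum_c \sum_(t : 'I_T)
     \sum_(S : {set 'I_T} | (t \notin S) && (#|S| == M))
     \sum_(sh in pffun_on z S predT) (cover_ev t S sh c)%:R * cfg_weight p T n c)).
  rewrite Prob_ind; apply: ler_sum => c _.
  case: (boolP (E_id M T n c)); last first.
    by move=> _; rewrite mul0r; do 3 (apply: sumr_ge0 => ? _); apply: X0.
  move=> /existsP[t /existsP[S /and3P[tS cS /existsP[sh hcov]]]].
  pose sh' := [ffun u => if u \in S then sh u else z].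
  have hcov' : cover_ev t S sh' c.
    have e : forall i, \big[orb/false]_(u in S) shiftw n (sh' u) (c u) i
        = \big[orb/false]_(u in S) shiftw n (sh u) (c u) i.
      by move=> i; apply: eq_bigr => u uS; rewrite /sh' ffunE uS.
    apply/forallP => i; move/forallP: hcov => /(_ i).
    by rewrite e.
  have sh'in : sh' \in pffun_on z S predT.
    apply/pffun_onP; split => //.
    apply/fintype.subsetP => u; rewrite inE /sh' ffunE.
    by case: (u \in S) => //; rewrite eqxx.
  rewrite mul1r.
  apply: le_trans (le_sum_single t _ _); last 2 first.
  - by [].
  - by move=> j _; apply: sumr_ge0 => S' _; apply: sumr_ge0 => sh'' _; apply: X0.
  apply: le_trans (le_sum_single S _ _); last 2 first.
  - by rewrite tS cS.
  - by move=> j _; apply: sumr_ge0 => sh'' _; apply: X0.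
  apply: le_trans (le_sum_single sh' _ _); last 2 first.
  - exact: sh'in.
  - by move=> j _; apply: X0.
  by rewrite hcov' mul1r.
rewrite exchange_big; apply: ler_sum => t _.
rewrite exchange_big; apply: ler_sum => S _.
rewrite exchange_big; apply: ler_sum => sh _.
by rewrite Prob_ind.
Qed.

Theorem mainTheorem2 (R : realType) (M T n : nat)
  (hM : (1 <= M)%N) (hT : (M.+1 <= T)%N) (hn : (1 <= n)%N) :
  Prob ((M.+1%:R : R)^-1) T n (E_id M T n) <=
  expR (M.+1%:R * ln (T%:R : R) + M%:R * ln (n%:R : R)
        - n%:R / M.+1%:R * expR (-1)).
Proof.
set p := (M.+1%:R : R)^-1.
have p0 : 0 <= p by rewrite invr_ge0.
have p1 : p <= 1 by rewrite invf_le1 // ler1n.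
have p01 : 0 <= p <= 1 by rewrite p0 p1.
pose z : 'I_n := Ordinal hn.
set q := 1 - p * (1 - p) ^+ M.
have q0 : 0 <= q.
  rewrite subr_ge0 mulr_ile1 // ?exprn_ge0 ?subr_ge0 // exprn_ile1 ?subr_ge0 //.
  lra.
apply: le_trans (@union_bound R p M T n z p01) _.
apply: (@le_trans _ _ (\sum_(t : 'I_T) \sum_(S : {set 'I_T} | #|S| == M)
           (q ^+ n *+ (n ^ M)))).
  apply: ler_sum => t _.
  rewrite big_mkcond [X in _ <= X]big_mkcond /=; apply: ler_sum => S _.
  case tS: (t \notin S); case cS: (#|S| == M) => //=.
  - apply: (@le_trans _ _ (\sum_(sh in pffun_on z S predT) q ^+ n)).
      apply: ler_sum => sh _.
      have := @cover_prob R p T n t S sh p01 tS; rewrite (eqP cS) -/q; exact: id.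
    by rewrite sumr_const card_pffun_on card_ord (eqP cS).
  - by rewrite mulrn_wge0 // exprn_ge0.
rewrite (eq_bigr (fun t => q ^+ n *+ (n ^ M) *+ 'C(T, M))); last first.
  move=> t _.
  rewrite (eq_bigl (fun S => S \in [set S : {set 'I_T} | #|S| == M])); last first.
    by move=> S; rewrite inE.
  by rewrite sumr_const card_draws card_ord.
rewrite sumr_const card_ord -[_ *+ T]mulr_natr -[_ *+ 'C(T, M)]mulr_natr -[q ^+ n *+ _]mulr_natr.
apply: le_trans (final_ineq R M T n hM _ hn).
  apply: ler_wpM2r; first by rewrite ler0n.
  apply: ler_wpM2l; first by rewrite mulr_ge0 // exprn_ge0.
  by rewrite ler_nat bin_le_exp.
by apply: leq_trans hT.
Qed.
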